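(* Every Generalized Median Mechanism $M:[0,1]^n\to[0,1]$ is DIC for every capacity $k$ with $1\le k\le n$.
   Context: There are $n$ agents $N=\{1,\dots,n\}$ with locations $x_i\in[0,1]$, profile $\boldsymbol{x}$. A mechanism is a deterministic function $M:[0,1]^n\to[0,1]$ giving the facility location from reported locations. The facility has capacity $k$. Given $\boldsymbol{x}$ and $s$, agent $i$ has higher priority than $j$ if $|s-x_i|<|s-x_j|$, ties broken by a fixed deterministic rule; $N_k^*(\boldsymbol{x},s)$ is the set of the $k$ highest-priority agents. Agent $i$'s ex-post equilibrium utility (of the subgame in which agents choose whether to travel to the capacity-$k$ facility, excess travellers rationed by priority) is $u_i^*(s,\boldsymbol{x},k)=1-|s-x_i|$ if $i\in N_k^*(\boldsymbol{x},s)$ and $0$ otherwise, computed at true locations. $M$ is DIC for capacity $k$ if for every $i$, every true profile $\boldsymbol{x}$, every $x_i'\in[0,1]$, and every reports $\hat{\boldsymbol{x}}_{-i}$ of the others, $u_i^*(M(x_i,\hat{\boldsymbol{x}}_{-i}),\boldsymbol{x},k)\ge u_i^*(M(x_i',\hat{\boldsymbol{x}}_{-i}),\boldsymbol{x},k)$. $M$ is a Generalized Median Mechanism if there are constants $a_S\in[0,1]$ for $S\subseteq N$ with $M(\boldsymbol{x})=\min_{S\subseteq N}\max\{\max_{i\in S}x_i,\,a_S\}$ for all $\boldsymbol{x}$ (for $S=\emptyset$ the inner term is $a_\emptyset$). *)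

(* Defs.v *)
From HB Require Import structures.
From mathcomp Require Import all_boot all_order all_algebra.
From mathcomp Require Import reals.
Set Implicit Arguments. Unset Strict Implicit. Unset Printing Implicit Defensive.
Import Order.TTheory GRing.Theory Num.Theory.
Local Open Scope ring_scope.

Definition in_unit_cube (R : realType) (n : nat) (x : 'I_n -> R) : Prop :=
  forall i, 0 <= x i <= 1.

Definition upd (R : realType) (n : nat) (x : 'I_n -> R) (i : 'I_n) (v : R)
  : 'I_n -> R := fun j => if j == i then v else x j.

(* Priority at facility location s: j has higher priority than i.
   Ties in distance are broken by a fixed deterministic rule, given by an
   injective ranking rk (smaller rank wins). *)
Definition higher (R : realType) (n : nat) (rk : 'I_n -> nat)
  (x : 'I_n -> R) (s : R) (j i : 'I_n) : bool :=
  (`|s - x j| < `|s - x i|) || ((`|s - x j| == `|s - x i|) && (rk j < rk i)%N).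

Definition topk (R : realType) (n : nat) (rk : 'I_n -> nat) (k : nat)
  (x : 'I_n -> R) (s : R) : {set 'I_n} :=
  [set i | (#|[set j | higher rk x s j i]| < k)%N].

Definition eq_utility (R : realType) (n : nat) (rk : 'I_n -> nat)
  (s : R) (x : 'I_n -> R) (k : nat) (i : 'I_n) : R :=
  if i \in topk rk k x s then 1 - `|s - x i| else 0.

Definition DIC (R : realType) (n : nat) (rk : 'I_n -> nat) (k : nat)
  (M : ('I_n -> R) -> R) : Prop :=
  forall (i : 'I_n) (x : 'I_n -> R) (xi' : R) (xhat : 'I_n -> R),
    in_unit_cube x -> 0 <= xi' <= 1 -> in_unit_cube xhat ->
    eq_utility rk (M (upd xhat i xi')) x k i
      <= eq_utility rk (M (upd xhat i (x i))) x k i.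

(* The inner term is \big[max/a_S]_(i in S) x_i (= a_emptyset for S = set0);
   the outer min uses the neutral element 1, which is harmless since every
   term is <= 1 on [0,1]^n (in particular the S = set0 term a_set0 <= 1). *)
Definition GMM (R : realType) (n : nat) (M : ('I_n -> R) -> R) : Prop :=
  exists a : {set 'I_n} -> R,
    (forall S, 0 <= a S <= 1) /\
    forall x : 'I_n -> R, in_unit_cube x ->
      M x = \big[Order.min/1]_(S : {set 'I_n}) (\big[Order.max/a S]_(i in S) x i).

(* Main.v *)
Require Import Defs.
From HB Require Import structures.
From mathcomp Require Import all_boot all_order all_algebra.
From mathcomp Require Import reals.
From mathcomp Require Import lra.
Import Order.TTheory GRing.Theory Num.Theory.
Local Open Scope ring_scope.

Ltac nomm t := lazymatch t with
  | context[Order.max _ _] => fail | context[Order.min _ _] => fail | _ => idtac end.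
Ltac elim_mm := repeat match goal with
  | |- context[Order.max ?a ?b] => nomm a; nomm b; case: (leP a b) => ?
  | |- context[Order.min ?a ?b] => nomm a; nomm b; case: (leP a b) => ?
  end.
Ltac elim_abs := repeat match goal with |- context [ `| ?e | ] =>
  let h := fresh in case: (lerP 0 e) => h; [rewrite (ger0_norm h) | rewrite (ltr0_norm h)] end.

Section Aux.
Variable R : realType.

Lemma betw (B A t w : R) :
  (t <= Order.min A (Order.max B t) <= Order.min A (Order.max B w)) \/
  (Order.min A (Order.max B w) <= Order.min A (Order.max B t) <= t).
Proof. elim_mm; lra. Qed.

Lemma absk (s s' t y : R) :
  (t <= s <= s') \/ (s' <= s <= t) ->
  `|s' - y| - `|s' - t| <= `|s - y| - `|s - t|.
Proof. case=> /andP[? ?]; elim_abs; lra. Qed.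

Lemma absd (s s' t : R) :
  (t <= s <= s') \/ (s' <= s <= t) -> `|s - t| <= `|s' - t|.
Proof. case=> /andP[? ?]; elim_abs; lra. Qed.

Lemma abs1 (B A t : R) : 0 <= B -> B <= 1 -> 0 <= A -> A <= 1 -> 0 <= t -> t <= 1 ->
  `|Order.min A (Order.max B t) - t| <= 1.
Proof. move=> *. elim_mm; elim_abs; lra. Qed.

Definition CL (f : R -> R) := exists A B : R,
  [/\ 0 <= A <= 1, 0 <= B <= 1 &
  forall v, 0 <= v -> v <= 1 -> f v = Order.min A (Order.max B v)].

Lemma CL_ext f g : CL f -> (forall v, f v = g v) -> CL g.
Proof.
case=> A [B [h1 h2 h4]] e; exists A, B; split => // v ? ?.
by rewrite -e h4.
Qed.
Arguments CL_ext {f g}.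

Lemma CL_const (c : R) : 0 <= c -> c <= 1 -> CL (fun _ => c).
Proof. move=> ? ?; exists c, c; split; [by apply/andP|by apply/andP|move=> v ? ?; elim_mm; lra]. Qed.

Arguments CL_const {c}.

Lemma CL_id : CL (fun v => v).
Proof. exists 1, 0; split; [by rewrite ler01 lexx|by rewrite ler01 lexx| move=> v ? ?; elim_mm; lra]. Qed.

Lemma mm3 (a b v : R) : Order.max (Order.min a v) (Order.min b v) = Order.min (Order.max a b) v.
Proof. elim_mm; lra. Qed.

Lemma mm3' (a b v : R) : Order.min (Order.max a v) (Order.max b v) = Order.max (Order.min a b) v.
Proof. elim_mm; lra. Qed.

Lemma bmax (a b : R) : 0 <= a <= 1 -> 0 <= b <= 1 -> 0 <= Order.max a b <= 1.
Proof. move=> /andP[? ?] /andP[? ?]; elim_mm; lra. Qed.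

Lemma bmin (a b : R) : 0 <= a <= 1 -> 0 <= b <= 1 -> 0 <= Order.min a b <= 1.
Proof. move=> /andP[? ?] /andP[? ?]; elim_mm; lra. Qed.

Lemma CL_max f g : CL f -> CL g -> CL (fun v => Order.max (f v) (g v)).
Proof.
case=> A1 [B1 [h1 h2 h4]]; case=> A2 [B2 [h5 h6 h8]].
set b := Order.max (Order.min A1 B1) (Order.min A2 B2).
have hb : 0 <= b <= 1 by apply: bmax; apply: bmin.
exists (Order.max b (Order.max A1 A2)), b; split => //.
- by apply: bmax => //; apply: bmax.
move=> v ? ?; rewrite h4 // h8 //.
have e1 : Order.min A1 (Order.max B1 v) = Order.max (Order.min A1 B1) (Order.min A1 v)
  := min_maxr _ _ _.
have e2 : Order.min A2 (Order.max B2 v) = Order.max (Order.min A2 B2) (Order.min A2 v)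
  := min_maxr _ _ _.
rewrite e1 e2 maxACA mm3 -/b.
exact: max_minr.
Qed.

Lemma CL_min f g : CL f -> CL g -> CL (fun v => Order.min (f v) (g v)).
Proof.
case=> A1 [B1 [h1 h2 h4]]; case=> A2 [B2 [h5 h6 h8]].
exists (Order.min A1 A2), (Order.min B1 B2); split.
- exact: bmin.
- exact: bmin.
move=> v ? ?; rewrite h4 // h8 //.
by rewrite minACA mm3'.
Qed.

Arguments CL_max {f g}.
Arguments CL_min {f g}.

Lemma CL_bigmax (I : Type) (r : seq I) (P : pred I) (F : I -> R -> R) (c : R) :
  0 <= c -> c <= 1 -> (forall j, CL (F j)) ->
  CL (fun v => \big[Order.max/c]_(j <- r | P j) F j v).
Proof.
move=> h0 h1 HF; elim: r => [|x r IH].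
  by apply: (CL_ext (CL_const h0 h1)) => v; rewrite big_nil.
case Px: (P x).
  by apply: (CL_ext (CL_max (HF x) IH)) => v; rewrite big_cons Px.
by apply: (CL_ext IH) => v; rewrite big_cons Px.
Qed.

Lemma CL_bigmin (I : Type) (r : seq I) (P : pred I) (F : I -> R -> R) (c : R) :
  0 <= c -> c <= 1 -> (forall j, CL (F j)) ->
  CL (fun v => \big[Order.min/c]_(j <- r | P j) F j v).
Proof.
move=> h0 h1 HF; elim: r => [|x r IH].
  by apply: (CL_ext (CL_const h0 h1)) => v; rewrite big_nil.
case Px: (P x).
  by apply: (CL_ext (CL_min (HF x) IH)) => v; rewrite big_cons Px.
by apply: (CL_ext IH) => v; rewrite big_cons Px.
Qed.

End Aux.
Arguments CL_ext {R f g}.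
Arguments CL_const {R c}.
Arguments CL_id {R}.
Arguments betw {R}.
Arguments absk {R s s' t}.
Arguments absd {R s s' t}.
Arguments abs1 {R B A t}.

Theorem proposition3p8 (R : realType) (n : nat) (rk : 'I_n -> nat)
  (M : ('I_n -> R) -> R) :
  injective rk -> GMM M ->
  forall k : nat, (1 <= k <= n)%N -> DIC rk k M.
Proof.
move=> _ [a [Ha HM]] k _ i x xi' xhat Hx /andP[Hv0 Hv1] Hxhat.
set f := fun v => \big[Order.min/1]_(S : {set 'I_n})
                    \big[Order.max/a S]_(j in S) upd xhat i v j.
have Hf : forall v, 0 <= v -> v <= 1 -> M (upd xhat i v) = f v.
  move=> v hv0 hv1; rewrite HM // => j; rewrite /upd; case: ifP => _;
    [by rewrite hv0 hv1 | exact: Hxhat].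
have CLf : CL R f.
  apply: CL_bigmin; [exact: ler01 | exact: lexx | ].
  move=> S; case/andP: (Ha S) => ? ?; apply: CL_bigmax => // j.
  case: (eqVneq j i) => hj.
    by apply: (CL_ext CL_id) => v; rewrite /upd hj eqxx.
  case/andP: (Hxhat j) => hx0 hx1.
  by apply: (CL_ext (CL_const hx0 hx1)) => v; rewrite /upd (negbTE hj).
case/andP: (Hx i) => Hx0 Hx1.
case: CLf => A [B [/andP[hA0 hA1] /andP[hB0 hB1] Hfe]].
rewrite !Hf // !Hfe //.
have bt := betw B A (x i) xi'.
set s := Order.min A (Order.max B (x i)) in bt *.
set s' := Order.min A (Order.max B xi') in bt *.
rewrite /eq_utility; case: ifP => H'.
  have -> : i \in topk rk k x s.
    move: H'; rewrite /topk !inE => H'; apply: leq_ltn_trans H'.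
    apply: subset_leq_card; apply/subsetP => j; rewrite !inE /higher.
    have hk := absk (x j) bt.
    case/orP => [h | /andP[/eqP h hr]];
      case: (ltrP `|s' - x j| `|s' - x i|) => h2 //=.
      lra.
    by rewrite hr andbT; apply/eqP; lra.
  have := absd bt; lra.
case: ifP => _; first (have := abs1 hB0 hB1 hA0 hA1 Hx0 Hx1; rewrite -/s; lra).
done.
Qed.
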